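(* Let $\rho_{AB}\in M_2(\mathbb{C})\otimes M_d(\mathbb{C})$ be a bipartite state with $\mathrm{rank}(\rho_{AB})=2$. Let $\{P_{a|0}\}_{a=0}^1$ and $\{P_{a|1}\}_{a=0}^1$ be two nontrivial projective measurements on subsystem $A$ which are different up to relabeling, and set $\rho_{a|x}=\mathrm{Tr}_A\big((P_{a|x}\otimes\mathbb{1})\rho_{AB}\big)$. Then: (i) if one of the four operators $\rho_{a|x}$ is zero, then the other three have rank two and are pairwise proportional; (ii) if $x_1\ne x_2$ and $\rho_{0|x_1},\rho_{1|x_1}$ both have rank one, then either $\rho_{0|x_2}$ and $\rho_{1|x_2}$ both have rank two, or all four $\rho_{a|x}$ have rank one and are pairwise proportional.
   Context: A nontrivial projective measurement on $\mathbb{C}^2$ is a pair $\{P_0,P_1\}$ of rank-one orthogonal projections with $P_0+P_1=\mathbb{1}$. Two such measurements $\{P_{a|0}\}_{a=0}^1,\{P_{a|1}\}_{a=0}^1$ are ''different up to relabeling'' if $P_{0|0}\ne P_{0|1}$ and $P_{0|0}\ne P_{1|1}$. *)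

(* Defs.v *)
(* Linear algebra over an arbitrary numClosedFieldType C
   (e.g. the complex numbers), with conjugation conjC. *)
From HB Require Import structures.
From mathcomp Require Import all_boot all_order all_algebra.
Set Implicit Arguments. Unset Strict Implicit. Unset Printing Implicit Defensive.
Import Order.TTheory GRing.Theory Num.Theory Num.Def.
Local Open Scope ring_scope.

Definition hadj (C : numClosedFieldType) m n (A : 'M[C]_(m, n)) : 'M[C]_(n, m) :=
  (map_mx conjC A)^T.

Definition hermitian_mx (C : numClosedFieldType) n (A : 'M[C]_n) : Prop :=
  hadj A = A.

Definition psd (C : numClosedFieldType) n (A : 'M[C]_n) : Prop :=
  hermitian_mx A /\ forall v : 'cV[C]_n, 0 <= (hadj v *m A *m v) 0 0.

Definition is_state (C : numClosedFieldType) n (rho : 'M[C]_n) : Prop :=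
  psd rho /\ \tr rho = 1.

Definition rank1_proj (C : numClosedFieldType) (P : 'M[C]_2) : Prop :=
  P *m P = P /\ hermitian_mx P /\ \rank P = 1%N.

Definition nontriv_proj_meas (C : numClosedFieldType) (P : 'I_2 -> 'M[C]_2) : Prop :=
  rank1_proj (P 0) /\ rank1_proj (P 1) /\ P 0 + P 1 = 1.

Definition diff_up_to_relabel (C : numClosedFieldType) (P : 'I_2 -> 'I_2 -> 'M[C]_2) : Prop :=
  P 0 0 != P 0 1 /\ P 0 0 != P 1 1.

(* Tensor convention: the index of C^2 (x) C^d for basis e_i (x) f_j is
   mxvec_index i j.  Tr_A((Q (x) 1) rho) as a d x d matrix:
   entry (j,k) = sum_i sum_i' Q i i' * rho (i',j) (i,k). *)
Definition ptrA_mul (C : numClosedFieldType) d (Q : 'M[C]_2) (rho : 'M[C]_(2 * d))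
  : 'M[C]_d :=
  \matrix_(j < d, k < d)
    \sum_(i < 2) \sum_(i' < 2) Q i i' * rho (mxvec_index i' j) (mxvec_index i k).

Definition proportional (C : numClosedFieldType) m n (A B : 'M[C]_(m, n)) : Prop :=
  exists c : C, c != 0 /\ A = c *: B.

(* Main.v *)
Require Import Defs.
From HB Require Import structures.
From mathcomp Require Import all_boot all_order all_algebra.
From mathcomp Require Import ring.
Set Implicit Arguments. Unset Strict Implicit. Unset Printing Implicit Defensive.
Import Order.TTheory GRing.Theory Num.Theory Num.Def.
Local Open Scope ring_scope.

Section Aux.
Variable C : numClosedFieldType.

Lemma hadjE m n (A : 'M[C]_(m, n)) i j : hadj A i j = (A j i)^*.
Proof. by rewrite /hadj !mxE. Qed.

Lemma hadj_mul m n p (A : 'M[C]_(m, n)) (B : 'M[C]_(n, p)) :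
  hadj (A *m B) = hadj B *m hadj A.
Proof. by rewrite /hadj map_mxM trmx_mul. Qed.

Lemma hadjK m n (A : 'M[C]_(m, n)) : hadj (hadj A) = A.
Proof. by apply/matrixP => i j; rewrite !hadjE conjCK. Qed.

Lemma hadjD m n (A B : 'M[C]_(m, n)) : hadj (A + B) = hadj A + hadj B.
Proof. by apply/matrixP => i j; rewrite /hadj !mxE rmorphD. Qed.

Lemma hadjZ m n a (A : 'M[C]_(m, n)) : hadj (a *: A) = a^* *: hadj A.
Proof. by apply/matrixP => i j; rewrite /hadj !mxE rmorphM. Qed.

Lemma hadj1 n : hadj (1%:M : 'M[C]_n) = 1%:M.
Proof. by apply/matrixP => i j; rewrite /hadj !mxE rmorph_nat eq_sym. Qed.

Lemma hadj0 m n : hadj (0 : 'M[C]_(m, n)) = 0.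
Proof. by apply/matrixP => i j; rewrite /hadj !mxE rmorph0. Qed.

Lemma hadj_scalar (a : C) : hadj (a%:M : 'M[C]_1) = (a^*)%:M.
Proof. by apply/matrixP => i j; rewrite !ord1 hadjE !mxE !eqxx !mulr1n. Qed.

Lemma norm_row_eq0 n (x : 'M[C]_(1, n)) : ((x *m hadj x) 0 0 == 0) = (x == 0).
Proof.
apply/idP/idP; last by move/eqP->; rewrite mul0mx mxE.
rewrite mxE => /eqP H; apply/eqP/matrixP => i j; rewrite ord1 mxE {i}.
have : forall k, true -> 0 <= x 0 k * hadj x k 0.
  by move=> k _; rewrite hadjE -normCK exprn_ge0.
move/psumr_eq0P => /(_ H j isT); rewrite hadjE -normCK => /eqP.
by rewrite expf_eq0 /= normr_eq0 => /eqP.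
Qed.

Lemma rank_mulhadj m n (M : 'M[C]_(m, n)) : \rank (M *m hadj M) = \rank M.
Proof.
apply/mxrank_injP; rewrite -submx0; apply/row_subP => i.
set K := (M :&: kermx (hadj M))%MS.
have /submxP [y Hy] : (row i K <= M)%MS by apply: submx_trans (row_sub _ _) (capmxSl _ _).
have /sub_kermxP H0 : (row i K <= kermx (hadj M))%MS.
  by apply: submx_trans (row_sub _ _) (capmxSr _ _).
rewrite submx0 -norm_row_eq0 {2}Hy hadj_mul mulmxA H0 mul0mx mxE //.
Qed.

Lemma psd_factor n (A : 'M[C]_n) : psd A ->
  exists Psi : 'M[C]_(n, n), A = Psi *m hadj Psi.
Proof.
case=> hA pA.
have hnorm : A \is normalmx.
  apply/normalmxP; have -> : (A ^t conjC)%sesqui = hadj A by rewrite /hadj map_trmx.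
  by rewrite hA.
have Asp := orthomx_spectralP hnorm.
set P := spectralmx A in Asp; set D := spectral_diag A in Asp.
have Pu : P \is unitarymx by apply: spectral_unitarymx.
have hP : invmx P = hadj P by rewrite invmx_unitary // /hadj map_trmx.
have PP : P *m hadj P = 1%:M by rewrite -hP mulmxV // unitarymx_unit.
have Dge0 : forall k, 0 <= D 0 k.
  move=> k; have := pA (hadj (row k P)); rewrite hadjK.
  have -> : D 0 k = (P *m A *m hadj P) k k.
    rewrite [in RHS]Asp hP !mulmxA PP mul1mx -mulmxA PP mulmx1 mxE eqxx mulr1n //.
  suff -> : (P *m A *m hadj P) k k = (row k P *m A *m hadj (row k P)) 0 0 by [].
  rewrite !mxE; apply: eq_bigr => j _; rewrite !mxE.
  congr (_ * _); first (apply: eq_bigr => i _; rewrite !mxE //).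
pose S := map_mx (fun x : C => sqrtC x) D.
exists (hadj P *m diag_mx S).
rewrite hadj_mul hadjK -mulmxA (mulmxA (diag_mx S)) Asp hP; rewrite -mulmxA; congr (_ *m _); congr (_ *m _).
apply/matrixP => i j; rewrite mul_diag_mx /hadj !mxE.
case: (eqVneq i j) => [->|ne]; last by rewrite !mulr0n rmorph0 mulr0.
rewrite !mulr1n geC0_conj ?sqrtC_ge0 // -expr2 sqrtCK //.
Qed.


Lemma row_norm_ge0 n (x : 'M[C]_(1, n)) : 0 <= (x *m hadj x) 0 0.
Proof. by rewrite mxE sumr_ge0 // => k _; rewrite hadjE -normCK exprn_ge0. Qed.

Lemma proj_vec (P : 'M[C]_2) : rank1_proj P -> exists w : 'cV[C]_2, P = w *m hadj w.
Proof.
case=> PP [hP rk].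
have PhP : P = P *m hadj P by rewrite hP PP.
have := mulmx_base P; move: (col_base P) (row_base P); rewrite rk => c r Hcr.
set s := (r *m hadj r) 0 0.
have s0 : 0 <= s by apply: row_norm_ge0.
exists (sqrtC s *: c).
rewrite hadjZ -scalemxAl -scalemxAr scalerA geC0_conj ?sqrtC_ge0 // -expr2 sqrtCK.
rewrite PhP -Hcr hadj_mul mulmxA -(mulmxA c) (mx11_scalar (r *m hadj r)) -/s.
by rewrite mul_mx_scalar -scalemxAl.
Qed.


Definition Mof d m (u : 'cV[C]_2) (Psi : 'M[C]_(2 * d, m)) : 'M[C]_(d, m) :=
  \matrix_(j, l) \sum_(i < 2) (u i 0)^* * Psi (mxvec_index i j) l.

Lemma sum2 (F : 'I_2 -> C) : \sum_(i < 2) F i = F 0 + F 1.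
Proof. by rewrite big_ord_recl big_ord1; congr (F _ + F _); apply: val_inj. Qed.

Lemma ptrA_Mof d m (u : 'cV[C]_2) (Psi : 'M[C]_(2 * d, m)) :
  ptrA_mul (u *m hadj u) (Psi *m hadj Psi) = Mof u Psi *m hadj (Mof u Psi).
Proof.
apply/matrixP => j k; rewrite /ptrA_mul /Mof /hadj !mxE !sum2 !mxE !big_ord1 !mxE.
rewrite !mulr_sumr -!big_split /=; apply: eq_bigr => l _. do 10?rewrite mxE; rewrite !sum2; do 10?rewrite mxE.
rewrite !rmorphD !rmorphM /= !conjCK. ring.
Qed.


Lemma ord2P (i : 'I_2) : i = 0 \/ i = 1.
Proof. by case: i => [[|[|//]]] ?; [left|right]; apply: val_inj. Qed.

Definition ip (w u : 'cV[C]_2) := (hadj w *m u) 0 0.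

Lemma ipE (w u : 'cV[C]_2) : ip w u = (w 0 0)^* * u 0 0 + (w 1 0)^* * u 1 0.
Proof. by rewrite /ip mxE sum2 !hadjE. Qed.

Lemma Mof_decomp d m (u v : 'cV[C]_2) (Psi : 'M[C]_(2 * d, m)) :
  u *m hadj u + v *m hadj v = 1%:M ->
  forall i j l, Psi (mxvec_index i j) l = u i 0 * Mof u Psi j l + v i 0 * Mof v Psi j l.
Proof.
move=> H i j l.
have Hii i' : u i 0 * (u i' 0)^* + v i 0 * (v i' 0)^* = (i == i')%:R.
  by move/matrixP: H => /(_ i i'); rewrite !mxE !big_ord1 !hadjE.
transitivity ((u i 0 * (u 0 0)^* + v i 0 * (v 0 0)^*) * Psi (mxvec_index 0 j) l +
  (u i 0 * (u 1 0)^* + v i 0 * (v 1 0)^*) * Psi (mxvec_index 1 j) l); last first.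
  by rewrite /Mof !mxE !sum2; ring.
rewrite !Hii; case: (ord2P i) => ->; rewrite eqxx /=.
  by rewrite mul1r mul0r addr0.
by rewrite mul1r mul0r add0r.
Qed.

Lemma Mof_lin d m (u v w : 'cV[C]_2) (Psi : 'M[C]_(2 * d, m)) (A B : 'M[C]_(d, m)) :
  (forall i j l, Psi (mxvec_index i j) l = u i 0 * A j l + v i 0 * B j l) ->
  Mof w Psi = ip w u *: A + ip w v *: B.
Proof.
move=> H; apply/matrixP => j l; rewrite /Mof !mxE !sum2 !H !ipE; ring.
Qed.

Lemma Mof_sub d m (u : 'cV[C]_2) (Psi : 'M[C]_(2 * d, m)) : (Mof u Psi <= Psi)%MS.
Proof.
apply/row_subP => j.
have -> : row j (Mof u Psi) = \sum_(i < 2) (u i 0)^* *: row (mxvec_index i j) Psi.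
  by apply/rowP => l; rewrite /Mof !mxE summxE; apply: eq_bigr => i _; rewrite !mxE.
by apply: summx_sub => i _; apply: scalemx_sub; apply: row_sub.
Qed.

Lemma Psi_sub d m p (Psi : 'M[C]_(2 * d, m)) (X : 'M[C]_(p, m)) :
  (forall i j, (row (mxvec_index i j) Psi <= X)%MS) -> (Psi <= X)%MS.
Proof. by move=> H; apply/row_subP => r; case/mxvec_indexP: r => i j; apply: H. Qed.


Lemma ip_nz (u v z : 'cV[C]_2) :
  u *m hadj u + v *m hadj v = 1%:M ->
  (v *m hadj v) *m (v *m hadj v) = v *m hadj v ->
  (z *m hadj z) *m (z *m hadj z) = z *m hadj z -> z *m hadj z != 0 ->
  z *m hadj z != v *m hadj v -> ip z u != 0.
Proof.
move=> H1 Hv Hid Hnz Hne; apply: contraNneq Hne => H0.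
have hu0 : hadj u *m z = 0.
  rewrite -[hadj u *m z]hadjK hadj_mul hadjK (mx11_scalar (hadj z *m u)).
  by rewrite -/(ip z u) H0 hadj_scalar rmorph0 raddf0.
set tau := (hadj v *m z) 0 0.
have zv : z = tau *: v.
  rewrite -[z]mul1mx -H1 mulmxDl -!mulmxA hu0 mulmx0 add0r.
  by rewrite (mx11_scalar (hadj v *m z)) mul_mx_scalar.
set c := tau * tau^*.
have Pz : z *m hadj z = c *: (v *m hadj v).
  by rewrite zv hadjZ -scalemxAl -scalemxAr scalerA.
rewrite Pz in Hid Hnz *; clearbody c.
move: Hid; rewrite -scalemxAl -scalemxAr scalerA Hv => /eqP.
rewrite -subr_eq0 -scalerBl scalemx_eq0 => /orP [|]; last first.
  by move=> /eqP Pv0; move: Hnz; rewrite Pv0 scaler0 eqxx.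
have c0 : c != 0 by move: Hnz; rewrite scalemx_eq0 negb_or => /andP [].
rewrite -{3}[c]mulr1 -mulrBr mulf_eq0 (negPf c0) /= subr_eq0 => /eqP ->.
by rewrite scale1r.
Qed.


Lemma R_scale d m (M N : 'M[C]_(d, m)) g : M = g *: N ->
  M *m hadj M = (g * g^*) *: (N *m hadj N).
Proof. by move=> ->; rewrite hadjZ -scalemxAl -scalemxAr scalerA. Qed.

Lemma part_i d m (Psi : 'M[C]_(2 * d, m)) (u v : 'cV[C]_2) :
  \rank Psi = 2%N -> u *m hadj u + v *m hadj v = 1%:M -> Mof u Psi = 0 ->
  \rank (Mof v Psi) = 2%N /\ forall z, Mof z Psi = ip z v *: Mof v Psi.
Proof.
move=> rk H1 Mu0.
have dec : forall i j l, Psi (mxvec_index i j) l = u i 0 * (0 : 'M[C]_(d, m)) j l + v i 0 * Mof v Psi j l.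
  by move=> i j l; rewrite (Mof_decomp Psi H1) Mu0.
split; last by move=> z; rewrite (Mof_lin z dec) scaler0 add0r.
apply/eqP; rewrite eqn_leq -{1}rk mxrankS ?Mof_sub //= -rk mxrankS //.
apply: Psi_sub => i j.
have -> : row (mxvec_index i j) Psi = v i 0 *: row j (Mof v Psi).
  by apply/rowP => l; rewrite !mxE dec !mxE mulr0 add0r.
by apply: scalemx_sub; apply: row_sub.
Qed.


Lemma rank1_form d m (M : 'M[C]_(d, m)) (a : 'cV[C]_d) (t : 'rV[C]_m) :
  M = a *m t -> \rank M = 1%N ->
  exists s, s != 0 /\ M *m hadj M = s *: (a *m hadj a).
Proof.
move=> HM rk; exists ((t *m hadj t) 0 0).
have E : M *m hadj M = (t *m hadj t) 0 0 *: (a *m hadj a).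
  rewrite HM hadj_mul mulmxA -(mulmxA a) (mx11_scalar (t *m hadj t)).
  by rewrite mul_mx_scalar -scalemxAl [in RHS]mxE eqxx mulr1n.
split=> //; apply/eqP => s0.
by move: rk; rewrite -rank_mulhadj E s0 scale0r mxrank0.
Qed.

Definition Qprop d m (Psi : 'M[C]_(2 * d, m)) (A0 : 'M[C]_d) (z : 'cV[C]_2) :=
  \rank (Mof z Psi) = 1%N /\
  exists s, s != 0 /\ Mof z Psi *m hadj (Mof z Psi) = s *: A0.

Lemma part_ii d m (Psi : 'M[C]_(2 * d, m)) (u v w w' : 'cV[C]_2) :
  \rank Psi = 2%N -> u *m hadj u + v *m hadj v = 1%:M ->
  \rank (Mof u Psi) = 1%N -> \rank (Mof v Psi) = 1%N ->
  ip w u != 0 -> ip w v != 0 -> ip w' u != 0 -> ip w' v != 0 ->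
  (\rank (Mof w Psi) = 2%N /\ \rank (Mof w' Psi) = 2%N) \/
  exists A0, [/\ Qprop Psi A0 u, Qprop Psi A0 v, Qprop Psi A0 w & Qprop Psi A0 w'].
Proof.
move=> rk H1 ru rv wu wv w'u w'v.
have := mulmx_base (Mof u Psi); move: (col_base (Mof u Psi)) (row_base (Mof u Psi)).
rewrite ru => a x Hax.
have := mulmx_base (Mof v Psi); move: (col_base (Mof v Psi)) (row_base (Mof v Psi)).
rewrite rv => b y Hby.
have dec : forall i j l, Psi (mxvec_index i j) l =
    u i 0 * (a *m x) j l + v i 0 * (b *m y) j l.
  by move=> i j l; rewrite (Mof_decomp Psi H1) Hax Hby.
have hlin z : Mof z Psi = ip z u *: (a *m x) + ip z v *: (b *m y) := Mof_lin z dec.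
have sub : (Psi <= x + y)%MS.
  apply: Psi_sub => i j.
  have -> : row (mxvec_index i j) Psi = (u i 0 * a j 0) *: x + (v i 0 * b j 0) *: y.
    by apply/rowP => l; rewrite !mxE dec !mxE !big_ord1 !mulrA.
  by apply: addmx_sub; apply: scalemx_sub; [apply: addsmxSl | apply: addsmxSr].
have free : row_free (col_mx x y).
  rewrite /row_free eqn_leq rank_leq_row /= -addsmxE; change (2 <= \rank (x + y)%MS)%N; rewrite -rk.
  exact: mxrankS.
have hM z : \rank (Mof z Psi) = \rank (row_mx (ip z u *: a) (ip z v *: b)).
  by rewrite -(mxrankMfree _ free) mul_row_col -!scalemxAl hlin.
have hr z : ip z u != 0 -> ip z v != 0 -> \rank (Mof z Psi) = \rank (a^T + b^T)%MS.
  move=> zu zv; rewrite hM -mxrank_tr tr_row_mx -addsmxE !linearZ /=.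
  by rewrite (adds_eqmx (eqmx_scale _ zu) (eqmx_scale _ zv)).
have ra : \rank a^T = 1%N.
  apply/eqP; rewrite eqn_leq mxrank_tr rank_leq_col /=.
  by apply: leq_trans (mxrankM_maxl a x); rewrite Hax ru.
have r1 : (1 <= \rank (a^T + b^T)%MS)%N.
  by rewrite -{1}ra; apply: mxrankS (addsmxSl _ _).
have r2 : (\rank (a^T + b^T)%MS <= 2)%N.
  by rewrite addsmxE; apply: rank_leq_row.
case: (eqVneq (\rank (a^T + b^T)%MS) 2) => [e2|ne2].
  by left; rewrite !hr.
right.
have e1 : \rank (a^T + b^T)%MS = 1%N.
  by apply/eqP; rewrite eqn_leq r1 andbT -ltnS ltn_neqAle ne2 r2.
have /andP [_ Hsub] : (a^T == a^T + b^T)%MS.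
  by rewrite -(mxrank_leqif_eq (addsmxSl _ _)).2 e1 ra.
have /submxP [D HD] : (b^T <= a^T)%MS := submx_trans (addsmxSr _ _) Hsub.
have Hb : b = a *m D^T by rewrite -[b]trmxK HD trmx_mul trmxK.
have Hform z : Mof z Psi = a *m (ip z u *: x + ip z v *: (D^T *m y)).
  by rewrite hlin Hb mulmxDr -!scalemxAr mulmxA.
exists (a *m hadj a).
have Q z : \rank (Mof z Psi) = 1%N -> Qprop Psi (a *m hadj a) z.
  by move=> rz; split=> //; apply: rank1_form (Hform z) rz.
split; apply: Q => //; by rewrite hr.
Qed.


Lemma rank_scale_nz m n (a : C) (A : 'M[C]_(m, n)) : a != 0 -> \rank (a *: A) = \rank A.
Proof. by move=> a0; rewrite (eqmx_scale _ a0). Qed.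

Lemma prop_of m n (A B X : 'M[C]_(m, n)) c1 c2 :
  c1 != 0 -> c2 != 0 -> A = c1 *: X -> B = c2 *: X -> proportional A B.
Proof.
move=> n1 n2 -> ->; exists (c1 / c2); split.
  by rewrite mulf_neq0 // invr_neq0.
by rewrite scalerA divfK.
Qed.

Lemma gg_nz (g : C) : g != 0 -> g * g^* != 0.
Proof. by move=> g0; rewrite mulf_neq0 // conjC_eq0. Qed.

End Aux.

Theorem lemma5 (C : numClosedFieldType) (d : nat) (rho : 'M[C]_(2 * d))
    (P : 'I_2 -> 'I_2 -> 'M[C]_2) :
  is_state rho ->
  \rank rho = 2%N ->
  (forall x : 'I_2, nontriv_proj_meas (fun a => P a x)) ->
  diff_up_to_relabel P ->
  let rhoax := fun a x : 'I_2 => ptrA_mul (P a x) rho in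
  (* (i) *)
  (forall a x : 'I_2, rhoax a x = 0 ->
     (forall a' x' : 'I_2, (a', x') != (a, x) -> \rank (rhoax a' x') = 2%N) /\
     (forall a' x' a'' x'' : 'I_2, (a', x') != (a, x) -> (a'', x'') != (a, x) ->
        proportional (rhoax a' x') (rhoax a'' x''))) /\
  (* (ii) *)
  (forall x1 x2 : 'I_2, x1 != x2 ->
     \rank (rhoax 0 x1) = 1%N -> \rank (rhoax 1 x1) = 1%N ->
     (\rank (rhoax 0 x2) = 2%N /\ \rank (rhoax 1 x2) = 2%N) \/
     ((forall a x : 'I_2, \rank (rhoax a x) = 1%N) /\
      (forall a x a' x' : 'I_2, proportional (rhoax a x) (rhoax a' x')))).
Proof.
move=> [Hpsd _] Hrk Hmeas [Hd1 Hd2] rhoax.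
have [Psi Hrho] := psd_factor Hpsd.
have rkPsi : \rank Psi = 2%N by rewrite -rank_mulhadj -Hrho.
have [W HW] : exists W : 'I_2 * 'I_2 -> 'cV[C]_2,
    forall ax, P ax.1 ax.2 = W ax *m hadj (W ax).
  apply: (@fin_all_exists _ (fun _ => 'cV[C]_2) (fun ax w => P ax.1 ax.2 = w *m hadj w)) => -[a x]; apply: proj_vec.
  by have [h0 [h1 _]] := Hmeas x; case: (ord2P a) => ->.
set w := fun a x => W (a, x).
have HPw a x : P a x = w a x *m hadj (w a x) by rewrite (HW (a, x)).
have HR a x : rhoax a x = Mof (w a x) Psi *m hadj (Mof (w a x) Psi).
  by rewrite /rhoax HPw Hrho ptrA_Mof.
have Hrank a x : \rank (rhoax a x) = \rank (Mof (w a x) Psi).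
  by rewrite HR rank_mulhadj.
have H1 x : w 0 x *m hadj (w 0 x) + w 1 x *m hadj (w 1 x) = 1%:M.
  by have [_ [_ h]] := Hmeas x; rewrite -!HPw h.
have Hid a x : (w a x *m hadj (w a x)) *m (w a x *m hadj (w a x)) = w a x *m hadj (w a x).
  by rewrite -HPw; have [h0 [h1 _]] := Hmeas x; case: (ord2P a) => ->; [case: h0 | case: h1].
have Hnz a x : w a x *m hadj (w a x) != 0.
  rewrite -HPw; have [h0 [h1 _]] := Hmeas x.
  have rk1 : \rank (P a x) = 1%N by case: (ord2P a) => ->; [case: h0 => _ [] | case: h1 => _ []].
  by apply/eqP => P0; move: rk1; rewrite P0 mxrank0.
have Hsum x : P 1 x = 1%:M - P 0 x.
  by have [_ [_ h]] := Hmeas x; rewrite -[1%:M]/(1 : 'M[C]_2) -h addrC addKr.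
have Hsum' x : P 0 x = 1%:M - P 1 x by rewrite Hsum opprB addrC subrK.
have D a a' : P a 0 != P a' 1.
  case: (ord2P a) => ->; case: (ord2P a') => -> //.
  - rewrite Hsum [P 0 1]Hsum'; apply: contra Hd2 => /eqP E.
    by apply/eqP; apply: (subrI 1%:M).
  - rewrite Hsum [P 1 1]Hsum; apply: contra Hd1 => /eqP E.
    by apply/eqP; apply: (subrI 1%:M).
have Hdist a a' x x' : x != x' -> P a x != P a' x'.
  case: (ord2P x) => ->; case: (ord2P x') => ->; rewrite ?eqxx // => _; by rewrite eq_sym; apply: D.
have Hpart a x : exists b, b != a /\
    w a x *m hadj (w a x) + w b x *m hadj (w b x) = 1%:M.
  case: (ord2P a) => ->; first by exists 1; split => //; apply: H1.
  by exists 0; split => //; rewrite addrC; apply: H1.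
have ipnz a a' x x' : x != x' -> ip (w a' x') (w a x) != 0.
  move=> nxx; have [b [ba Hb]] := Hpart a x.
  apply: ip_nz Hb (Hid b x) (Hid a' x') (Hnz a' x') _.
  by rewrite -!HPw; apply: Hdist; rewrite eq_sym.
have Hother (a b : 'I_2) : b != a -> forall a', a' != a -> a' = b.
  by case: (ord2P a) => ->; case: (ord2P b) => -> //= _ a'; case: (ord2P a') => ->.
split.
  move=> a x Hz.
  have [b [ba Hb]] := Hpart a x.
  have Mu0 : Mof (w a x) Psi = 0.
    by apply/eqP; rewrite -mxrank_eq0 -Hrank Hz mxrank0.
  have [rkv Hlin] := part_i rkPsi Hb Mu0.
  have claim a' x' : (a', x') != (a, x) -> exists g, g != 0 /\
      rhoax a' x' = (g * g^*) *: rhoax b x /\ \rank (rhoax a' x') = 2%N.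
    rewrite xpair_eqE => hne.
    have [g [g0 Hg]] : exists g, g != 0 /\ Mof (w a' x') Psi = g *: Mof (w b x) Psi.
      case: (eqVneq x' x) hne => [-> | nx] /=.
        rewrite andbT => na; rewrite (Hother a b ba a' na).
        by exists 1; split; [exact: oner_neq0 | rewrite scale1r].
      by move=> _; exists (ip (w a' x') (w b x)); split; [apply: ipnz; rewrite eq_sym | apply: Hlin].
    exists g; split => //; split; first by rewrite !HR; apply: R_scale.
    by rewrite Hrank Hg rank_scale_nz.
  split; first by move=> a' x' /claim [g [_ [_ ->]]].
  move=> a' x' a'' x'' /claim [g [g0 [E1 _]]] /claim [g' [g0' [E2 _]]].
  exact: prop_of (gg_nz g0) (gg_nz g0') E1 E2.
move=> x1 x2 hne r0 r1.
have := part_ii rkPsi (H1 x1) _ _ (ipnz 0 0 x1 x2 _) (ipnz 1 0 x1 x2 _)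
  (ipnz 0 1 x1 x2 _) (ipnz 1 1 x1 x2 _).
rewrite Hrank in r0; rewrite Hrank in r1; move=> /(_ r0 r1 hne hne hne hne) [[e0 e1]|[A0 [Q0 Q1 Q2 Q3]]].
  by left; rewrite !Hrank.
right.
have Hx x : x = x1 \/ x = x2.
  move: hne; case: (ord2P x1) => ->; case: (ord2P x2) => -> //= _;
  by case: (ord2P x) => ->; auto.
have Qall a x : Qprop Psi A0 (w a x).
  by case: (Hx x) => ->; case: (ord2P a) => ->.
split; first by move=> a x; rewrite Hrank; case: (Qall a x).
move=> a x a' x'.
have [_ [s [s0 Es]]] := Qall a x.
have [_ [s' [s0' Es']]] := Qall a' x'.
exact: (prop_of s0 s0' (etrans (HR a x) Es) (etrans (HR a' x') Es')).
Qed.
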